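(* Let $n\ge 4$, $x_1,\dots,x_{n-1}>0$, $\gamma,\delta>0$ with $\gamma\ne1$, $\delta\ne1$, and set $x_0=1$. Let $\mathbf{P}=[p_{ij}]\in\mathbb{R}^{n\times n}$ be given by $p_{ij}=x_{j-1}/x_{i-1}$ for all $i,j$, except $p_{12}=\delta x_1$, $p_{21}=1/(\delta x_1)$, $p_{13}=\gamma x_2$, $p_{31}=1/(\gamma x_2)$. Then the characteristic polynomial of $\mathbf{P}$ is $$p_{\mathbf{P}}(\lambda)=\det(\mathbf{P}-\lambda\mathbf{I})=(-1)^n\lambda^{n-3}\left(\lambda^3-n\lambda^2-\left(\frac{\gamma}{\delta}+\frac{\delta}{\gamma}\right)-(n-3)\left(\gamma+\delta+\frac1\gamma+\frac1\delta\right)+4n-10\right).$$ *)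

(* Defs.v *)
From HB Require Import structures.
From mathcomp Require Import all_boot all_order all_algebra.
Set Implicit Arguments. Unset Strict Implicit. Unset Printing Implicit Defensive.
Import Order.TTheory GRing.Theory Num.Theory.
Local Open Scope ring_scope.

(* The perturbed PCM of the paper, with 0-based indices:
   row/column index i : 'I_n corresponds to the paper's index i+1.
   x : nat -> R with x 0 = 1 (paper's x_0 = 1); paper's p_{ij} = x_{j-1}/x_{i-1}
   becomes entry (i,j) = x j / x i. *)
Definition pertPCM (R : fieldType) (n : nat) (x : nat -> R) (gamma delta : R)
  : 'M[R]_n :=
  \matrix_(i < n, j < n)
    if (nat_of_ord i == 0%N) && (nat_of_ord j == 1%N) then delta * x 1%N
    else if (nat_of_ord i == 1%N) && (nat_of_ord j == 0%N) then (delta * x 1%N)^-1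
    else if (nat_of_ord i == 0%N) && (nat_of_ord j == 2%N) then gamma * x 2%N
    else if (nat_of_ord i == 2%N) && (nat_of_ord j == 0%N) then (gamma * x 2%N)^-1
    else x j / x i.

(* Main.v *)
Require Import Defs.
From HB Require Import structures.
From mathcomp Require Import all_boot all_order all_algebra.
From mathcomp Require Import ring.
Import Order.TTheory GRing.Theory Num.Theory.
Local Open Scope ring_scope.

Lemma det3 (R : comPzRingType) (F : nat -> nat -> R) :
  \det (\matrix_(i < 3, j < 3) F i j) =
  F 0 0 * (F 1 1 * F 2 2 - F 1 2 * F 2 1)
  - F 0 1 * (F 1 0 * F 2 2 - F 1 2 * F 2 0)
  + F 0 2 * (F 1 0 * F 2 1 - F 1 1 * F 2 0).
Proof.
rewrite (expand_det_row _ ord0) !big_ord_recl big_ord0 /cofactor.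
rewrite !(expand_det_row _ ord0) !big_ord_recl !big_ord0 /cofactor.
rewrite !det_mx11 !mxE /=.
rewrite /bump /=. ring.
Qed.

Lemma sylv (R : idomainType) (n k : nat) (c : R) (U : 'M[R]_(n, k)) (V : 'M[R]_(k, n)) :
  c != 0 -> (k <= n)%N ->
  \det (c%:M + U *m V) = c ^+ (n - k) * \det (c%:M + V *m U).
Proof.
move=> c0 kn.
have E1 : block_mx (c%:M) (-U) V 1%:M *m block_mx 1%:M U 0 (c%:M)
   = block_mx (c%:M) 0 V (c%:M + V *m U).
  rewrite mulmx_block !mulmx1 ?mul0mx ?mulmx0 ?mul1mx ?addr0 mul_scalar_mx mulNmx mul_mx_scalar addrN.
  by rewrite [V *m U + _]addrC.
have E2 : block_mx (c%:M + U *m V) (-U) 0 1%:M *m block_mx 1%:M 0 V 1%:M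
   = block_mx (c%:M) (-U) V 1%:M.
  rewrite mulmx_block !mulmx1 ?mul0mx ?mulmx0 ?mul1mx ?addr0 add0r mulNmx.
  by rewrite addrK !add0r.
have := congr1 determinant E1.
rewrite -E2 !det_mulmx det_ublock det_lblock det_ublock !det1 !det_scalar !mulr1 ?mul1r.
move=> H; apply: (@mulIf _ (c ^+ k)); first by rewrite expf_neq0.
by rewrite H det_lblock det_scalar mulrAC -exprD subnK.
Qed.

Lemma sum3E (R : nmodType) (n : nat) (F : nat -> R) : (3 <= n)%N ->
  \sum_(i < n) F i = F 0%N + F 1%N + F 2%N + \sum_(3 <= i < n) F i.
Proof.
move=> h.
have h0 : (0 < n)%N by apply: leq_trans h.
have h1 : (1 < n)%N by apply: leq_trans h.
have h2 : (2 < n)%N by apply: leq_trans h.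
rewrite -(big_mkord xpredT F).
rewrite (big_ltn (F:=F) h0) (big_ltn (F:=F) h1) (big_ltn (F:=F) h2).
by rewrite !addrA.
Qed.

Section S.
Variables (R : realFieldType) (x : nat -> R) (gamma delta : R).

Definition uu (k : nat) : R :=
  if k == 1%N then delta - 1 else if k == 2%N then gamma - 1 else 0.
Definition vv (k : nat) : R :=
  if k == 1%N then delta^-1 - 1 else if k == 2%N then gamma^-1 - 1 else 0.
Definition gU (l : nat) (i : nat) : R :=
  [:: (x i)^-1; (i == 0%N)%:R; vv i / x i]`_l.
Definition fV (l : nat) (j : nat) : R :=
  [:: x j; x j * uu j; (j == 0%N)%:R]`_l.
Definition Um n : 'M[R]_(n, 3) := \matrix_(i < n, l < 3) gU l i.
Definition Vm n : 'M[R]_(3, n) := \matrix_(l < 3, j < n) fV l j.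
End S.
Arguments uu {R}. Arguments vv {R}. Arguments gU {R}. Arguments fV {R}. Arguments Um {R}. Arguments Vm {R}.

Lemma PU (R : realFieldType) (n : nat) (x : nat -> R) (gamma delta : R) :
  (forall k, (k < n)%N -> x k != 0) -> x 0%N = 1 ->
  gamma != 0 -> delta != 0 ->
  @pertPCM R n x gamma delta = @Um R x gamma delta n *m @Vm R x gamma delta n.
Proof.
move=> hx x0 g0 d0.
apply/matrixP => i j; rewrite !mxE !big_ord_recl big_ord0 !mxE /=.
rewrite /gU /fV /uu /vv /=.
case: i => [i Hi]; case: j => [j Hj] /=.
have xi := hx _ Hi; have xj := hx _ Hj.
case: i Hi xi => [|[|[|i]]] Hi xi; case: j Hj xj => [|[|[|j]]] Hj xj /=;
  rewrite ?x0 ?mulr0 ?mul0r ?mulr1 ?mul1r ?addr0 ?add0r ?invr1 ?divr1; try field; 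
  rewrite ?mulf_neq0 //; by apply/andP.
Qed.

Definition Gm (R : realFieldType) (n : nat) (gamma delta : R) (l m : nat) : R :=
  let su := delta + gamma - 2 in
  let w := (delta - 1) * (delta^-1 - 1) + (gamma - 1) * (gamma^-1 - 1) in
  nth 0 (nth [::] [:: [:: n%:R; 1; - w - su]; [:: su; 0; w]; [:: 1; 1; 0]] l) m.

Lemma VU (R : realFieldType) (n : nat) (x : nat -> R) (gamma delta : R) :
  (3 <= n)%N ->
  (forall k, (k < n)%N -> x k != 0) -> x 0%N = 1 ->
  gamma != 0 -> delta != 0 ->
  @Vm R x gamma delta n *m @Um R x gamma delta n =
  \matrix_(l < 3, m < 3) @Gm R n gamma delta l m.
Proof.
move=> n3 hx x0 g0 d0.
apply/matrixP => l m; rewrite !mxE.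
under eq_bigr do rewrite !mxE.
rewrite (@sum3E _ n (fun i => fV x gamma delta l i * gU x gamma delta m i) n3).
have tail : \sum_(3 <= i < n) fV x gamma delta l i * gU x gamma delta m i
   = ((nat_of_ord l == 0%N) && (nat_of_ord m == 0%N))%:R *+ (n - 3).
  rewrite -sumr_const_nat; apply: eq_big_nat => i /andP[i3 iN].
  have xi := hx _ iN.
  case: i i3 iN xi => [|[|[|i]]] // _ _ xi.
  rewrite /fV /gU /uu /vv /=.
  case: l => [[|[|[|l]]] Hl] //; case: m => [[|[|[|m]]] Hm] //=;
   rewrite ?mulr0 ?mul0r ?mulr1 ?mul1r //; first [by rewrite mulfV | by rewrite mulr0n mulr0 | by rewrite /= mulr0 ].
rewrite tail {tail} /Gm /fV /gU /uu /vv /= x0.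
have x1 := hx 1%N (leq_trans (isT : (1 < 3)%N) n3).
have x2 := hx 2%N (leq_trans (isT : (2 < 3)%N) n3).
case: l => [[|[|[|l]]] Hl] //; case: m => [[|[|[|m]]] Hm] //=;
  rewrite ?mulr0 ?mul0r ?mulr1 ?mul1r ?addr0 ?add0r ?invr1 ?divr1 ?mulr0n ?addr0.
all: rewrite ?mul0rn ?addr0.
- rewrite !mulfV // -[in RHS](subnK n3) natrD /=. ring.
all: try (field; rewrite ?mulf_neq0 //; by apply/andP).
all: by field; rewrite g0 d0 x1 x2.
Qed.
Arguments PU {R n x gamma delta}.
Arguments VU {R n x gamma delta}.
Arguments Gm {R}.

Theorem theorem3 (R : realFieldType) (n : nat) (x : nat -> R) (gamma delta : R) :
  (4 <= n)%N ->
  x 0%N = 1 ->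
  (forall k, (1 <= k <= n.-1)%N -> 0 < x k) ->
  0 < gamma -> 0 < delta -> gamma != 1 -> delta != 1 ->
  \det (map_mx polyC (@pertPCM R n x gamma delta) - 'X%:M) =
    (-1) ^+ n * 'X ^+ (n - 3) *
      ('X ^+ 3 - n%:R *: 'X ^+ 2 - ((gamma / delta + delta / gamma)%:P)
       - ((n - 3)%:R * (gamma + delta + gamma^-1 + delta^-1))%:P
       + (4 * n%:R - 10)%:P) :> {poly R}.
Proof.
move=> n4 x0 hpos g0 d0 _ _.
have n3 : (3 <= n)%N by apply: ltnW.
have hx : forall k, (k < n)%N -> x k != 0.
  move=> [|k] kn; first by rewrite x0 oner_neq0.
  by rewrite lt0r_neq0 // hpos //= -ltnS prednK // (leq_trans _ n4).
have g0' : gamma != 0 by rewrite lt0r_neq0.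
have d0' : delta != 0 by rewrite lt0r_neq0.
rewrite (PU hx x0 g0' d0') map_mxM.
have -> : - ('X%:M) = (- 'X)%:M :> 'M[{poly R}]_n by rewrite raddfN.
rewrite addrC sylv; last by []; last by rewrite oppr_eq0 polyX_eq0.
rewrite -map_mxM (VU n3 hx x0 g0' d0').
have -> : (- 'X)%:M + map_mx polyC (\matrix_(l < 3, m < 3) Gm n gamma delta l m) =
   \matrix_(i < 3, j < 3) ((- 'X) *+ (nat_of_ord i == nat_of_ord j) + (Gm n gamma delta i j)%:P)
   :> 'M[{poly R}]_3.
  by apply/matrixP => i j; rewrite !mxE.
rewrite (@det3 _ (fun i j => (- 'X) *+ (i == j) + (Gm n gamma delta i j)%:P)) /Gm /=.
set su := delta + gamma - 2.
set w := (delta - 1) * (delta^-1 - 1) + (gamma - 1) * (gamma^-1 - 1).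
have hK : gamma / delta + delta / gamma + (n - 3)%:R * (gamma + delta + gamma^-1 + delta^-1)
   - (4 * n%:R - 10) = (1 - n%:R) * w + su * (- w - su).
  rewrite /su /w natrB //; field; by rewrite g0' d0'.
have E : forall (p : {poly R}) (a b c : R), p - a%:P - b%:P + c%:P = p - (a + b - c)%:P.
  by move=> p a b c; rewrite !rmorphD !rmorphN /=; ring.
rewrite E hK {E hK}.
rewrite -mul_polyC !(rmorphD, rmorphB, rmorphN, rmorphM, rmorph1, rmorph0, rmorph_nat) /=.
set SU := su%:P; set W := w%:P.
have [m ->] : exists m, n = (m + 3)%N by exists (n - 3)%N; rewrite subnK.
rewrite addnK exprNn exprD natrD expr1n mulr1 [(- 'X) ^+ m]exprNn.
ring.
Qed.
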